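(* Let $\mathfrak g$ be a finite-dimensional completely solvable Lie superalgebra over $\mathbf k$. Then every proper (graded) sub-superalgebra of $\mathfrak g$ is contained in a sub-superalgebra of $\mathfrak g$ of codimension one.
   Context: $\mathbf k$ is algebraically closed of characteristic $p>2$. A Lie superalgebra $\mathfrak g$ is completely solvable if $[\mathfrak g,\mathfrak g]$ is nilpotent. Sub-superalgebras are $\mathbb Z_2$-graded subalgebras. *)

(* Defs.v *)
From HB Require Import structures.
From mathcomp Require Import all_boot all_order all_algebra.
Set Implicit Arguments. Unset Strict Implicit. Unset Printing Implicit Defensive.
Import GRing.Theory.
Local Open Scope ring_scope.

(* Parity is a bool (false = even). *)
Section LieSuper.
Variables (F : fieldType) (vT : vectType F).

Definition gpart (g0 g1 : {vspace vT}) (b : bool) : {vspace vT} :=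
  if b then g1 else g0.

Definition is_lie_superalgebra (g0 g1 : {vspace vT})
    (br : vT -> vT -> vT) : Prop :=
  [/\ (g0 + g1)%VS = fullv /\ directv (g0 + g1),
      (forall (a : F) (x y z : vT), br (a *: x + y) z = a *: br x z + br y z),
      (forall (a : F) (x y z : vT), br x (a *: y + z) = a *: br x y + br x z) /\
      (forall (i j : bool) (x y : vT), x \in gpart g0 g1 i -> y \in gpart g0 g1 j ->
          br x y \in gpart g0 g1 (i (+) j)),
      (forall (i j : bool) (x y : vT), x \in gpart g0 g1 i -> y \in gpart g0 g1 j ->
          br x y = - (((-1) ^+ (i && j)) *: br y x)) /\
      (forall (i j k : bool) (x y z : vT), x \in gpart g0 g1 i ->
          y \in gpart g0 g1 j -> z \in gpart g0 g1 k ->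
          br x (br y z) = br (br x y) z + ((-1) ^+ (i && j)) *: br y (br x z))
    & (* needed for p = 3: [x,[x,x]] = 0 for odd x *) (forall x : vT, x \in g1 -> br x (br x x) = 0)].

(* [A, B] : the span of all brackets [a, b], a in A, b in B
   (by bilinearity, spanned by brackets of basis vectors). *)
Definition brs (br : vT -> vT -> vT) (A B : {vspace vT}) : {vspace vT} :=
  <<[seq br x y | x <- (vbasis A : seq vT), y <- (vbasis B : seq vT)]>>%VS.

Definition derived (br : vT -> vT -> vT) : {vspace vT} := brs br fullv fullv.

Definition lcs (br : vT -> vT -> vT) (L : {vspace vT}) (k : nat) : {vspace vT} :=
  iter k (brs br L) L.

Definition nilpotent_sub (br : vT -> vT -> vT) (L : {vspace vT}) : Prop :=
  exists k : nat, lcs br L k = 0%VS.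

Definition completely_solvable (br : vT -> vT -> vT) : Prop :=
  nilpotent_sub br (derived br).

Definition sub_superalgebra (g0 g1 : {vspace vT}) (br : vT -> vT -> vT)
    (S : {vspace vT}) : Prop :=
  ((S :&: g0) + (S :&: g1))%VS = S /\
  (forall x y : vT, x \in S -> y \in S -> br x y \in S).

End LieSuper.

(* Main.v *)
From HB Require Import structures.
From mathcomp Require Import all_boot all_order all_algebra.
From Stdlib Require Import Classical Lia.
From mathcomp Require Import zify.
Require Import Defs.
Import GRing.Theory.
Local Open Scope ring_scope.
Section Lin.
Variables (F : fieldType) (aT rT : vectType F).
Definition linw (f : aT -> rT) (hf : linear f) : aT -> rT := f.
HB.instance Definition _ f hf := GRing.isLinear.Build F aT rT *:%R (@linw f hf) hf.
Definition toHom f hf : 'Hom(aT, rT) := linfun (@linw f hf).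
Lemma toHomE f hf v : @toHom f hf v = f v.
Proof. exact: lfunE. Qed.
End Lin.
Arguments toHom {F aT rT f} hf.
Arguments toHomE {F aT rT f} hf v.

Lemma nz_of_neq0 (F : fieldType) (vT : vectType F) (U : {vspace vT}) :
  U != 0%VS -> exists2 v, v \in U & v != 0.
Proof.
move=> hU; apply: NNPP => h; move/eqP: hU; apply; apply/vspaceP => v.
rewrite memv0; apply/idP/eqP => [hv|->]; last exact: mem0v.
by apply: NNPP => hv0; apply: h; exists v => //; apply/eqP.
Qed.
Section Eig.
Variables (F : closedFieldType) (uT : vectType F).
Lemma exists_eig (phi : 'End(uT)) : (exists v : uT, v != 0) ->
  exists a, exists2 v, v != 0 & phi v = a *: v.
Proof.
move=> [v0 v0nz].
have hd : (0 < \dim {:uT})%N.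
  rewrite lt0n dimv_eq0; apply: contra v0nz => /eqP h.
  by have := memvf v0; rewrite h memv0.
set e := vbasis {:uT}.
have eb : basis_of {:uT} e by apply: vbasisP.
have := @passmx.leigenspaceE F uT e eb phi.
set A := passmx.mxof e e phi.
have [a ra] : exists a, root (char_poly A) a.
  by apply/closed_rootP; rewrite size_char_poly; case: (\dim {:uT}) hd.
rewrite -eigenvalue_root_char in ra.
move=> hE; exists a.
have : passmx.leigenspace phi a != 0%VS by rewrite hE passmx.vsof_eq0.
rewrite /passmx.leigenspace => hne.
apply: NNPP => hno; move/eqP: hne; apply.
apply/vspaceP => v; rewrite memv0 memv_ker add_lfunE opp_lfunE scale_lfunE id_lfunE.
apply/eqP/eqP => [h|->]; last by rewrite linear0 scaler0 subr0.
apply: NNPP => vnz; apply: hno; exists v; first by apply/eqP.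
by apply/eqP; rewrite -subr_eq0; apply/eqP.
Qed.
End Eig.
Lemma eig_mod (F : closedFieldType) (vT : vectType F) (f : 'End(vT))
  (X P : {vspace vT}) : (X <= P)%VS -> X != P ->
  (forall v, v \in P -> f v \in P) -> (forall v, v \in X -> f v \in X) ->
  exists a, exists2 y, y \in P & y \notin X /\ f y - a *: y \in X.
Proof.
move=> XP XnP fP fX.
set Q := (P :\: X)%VS.
have hQX : (Q :&: X = 0)%VS by apply: capv_diff.
have hXQ : (X :&: Q = 0)%VS by rewrite capvC.
have hQXP : (Q + X = P)%VS by rewrite addv_diff; apply/addv_idPl.
have QP : (Q <= P)%VS by rewrite -hQXP addvSl.
set pi := daddv_pi Q X.
have lin : linear (fun x : subvs_of Q => vsproj Q (pi (f (vsval x)))).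
  by move=> c x y; rewrite !linearP.
set phi : 'End(subvs_of Q) := toHom lin.
have [v vQ vnz] : exists2 v, v \in Q & v != 0.
  apply: nz_of_neq0; apply: contra XnP => /eqP Q0.
  by rewrite -hQXP Q0 add0v.
have [a [x xnz hx]] : exists a, exists2 x, x != 0 & phi x = a *: x.
  apply: exists_eig; exists (vsproj Q v).
  apply: contra vnz => /eqP h; by rewrite -(vsprojK vQ) h linear0.
exists a; exists (vsval x).
  by apply: (subvP QP); apply: subvsP.
split.
  apply: contra xnz => hxX.
  have : vsval x \in (Q :&: X)%VS by rewrite memv_cap subvsP.
  by rewrite hQX memv0 => /eqP h; apply/eqP/subvs_inj; rewrite h linear0.
have fyP : f (vsval x) \in (Q + X)%VS by rewrite hQXP; apply: fP; apply: (subvP QP); apply: subvsP.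
have := daddv_pi_add hQX fyP.
have e1 : pi (f (vsval x)) = a *: vsval x.
  have := congr1 vsval hx; rewrite toHomE vsprojK; last exact: memv_pi.
  by move=> ->.
rewrite -/pi e1 => <-; rewrite addrC addKr; exact: memv_pi.
Qed.

Lemma dim_img_mod (F : fieldType) (vT : vectType F) (g : 'End(vT))
  (X P : {vspace vT}) y : (X <= P)%VS ->
  (forall v, v \in X -> g v \in X) ->
  y \in P -> y \notin X -> g y \in X ->
  (\dim (X + g @: P) < \dim P)%N.
Proof.
move=> XP gX yP yX gy.
set K := (P :&: (g @^-1: X))%VS.
have XK : (X <= K)%VS.
  apply/subvP => v vX; rewrite memv_cap (subvP XP) //= -memv_preim; exact: gX.
have yK : y \in K by rewrite memv_cap yP -memv_preim.
have ltXK : (\dim X < \dim K)%N.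
  have h1 : (X <= X + <[y]>)%VS by apply: addvSl.
  have h2 : (X + <[y]> <= K)%VS by rewrite subv_add XK -memvE.
  apply: (@leq_trans (\dim (X + <[y]>))); last exact: dimvS.
  rewrite ltn_neqAle (dimvS h1) andbT.
  apply: contra yX => /eqP hd.
  have : (X == X + <[y]>)%VS by rewrite eqEdim h1 -hd leqnn.
  move/eqP => ->; apply: (subvP (addvSr _ _)); exact: memv_line.
have gKX : (g @: K <= X :&: g @: P)%VS.
  apply/subvP => z /memv_imgP [u uK ->].
  move: uK; rewrite /K memv_cap -(memv_preim g) => /andP [uP guX].
  by rewrite memv_cap guX memv_img.
have d1 := limg_ker_dim g K.
have d2 := limg_ker_dim g P.
have d3 := dimv_sum_cap X (g @: P).
have d4 := dimvS gKX.
have d5 : (\dim (K :&: lker g) <= \dim (P :&: lker g))%N.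
  by apply: dimvS; apply: capvS => //; apply: capvSl.
lia.
Qed.

Section Super.
Variables (F : closedFieldType) (vT : vectType F) (g0 g1 : {vspace vT})
  (br : vT -> vT -> vT).
Hypothesis hL : is_lie_superalgebra g0 g1 br.
Hypothesis h2 : (2%:R : F) != 0.

Let hfull : (g0 + g1 = fullv)%VS. Proof. by case: hL => [[]]. Qed.
Let hcap : (g0 :&: g1 = 0)%VS. Proof. by case: hL => [[_ /directv_addP]]. Qed.
Let hcap' : (g1 :&: g0 = 0)%VS. Proof. by rewrite capvC. Qed.
Let hl1 : forall (a : F) (x y z : vT), br (a *: x + y) z = a *: br x z + br y z.
Proof. by case: hL. Qed.
Let hl2 : forall (a : F) (x y z : vT), br x (a *: y + z) = a *: br x y + br x z.
Proof. by case: hL => _ _ []. Qed.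
Let hpar : forall (i j : bool) (x y : vT), x \in gpart g0 g1 i -> y \in gpart g0 g1 j ->
          br x y \in gpart g0 g1 (i (+) j).
Proof. by case: hL => _ _ []. Qed.
Let hanti : forall (i j : bool) (x y : vT), x \in gpart g0 g1 i -> y \in gpart g0 g1 j ->
          br x y = - (((-1) ^+ (i && j)) *: br y x).
Proof. by case: hL => _ _ _ []. Qed.
Let hjac : forall (i j k : bool) (x y z : vT), x \in gpart g0 g1 i ->
          y \in gpart g0 g1 j -> z \in gpart g0 g1 k ->
          br x (br y z) = br (br x y) z + ((-1) ^+ (i && j)) *: br y (br x z).
Proof. by case: hL => _ _ _ []. Qed.

Lemma dbl0 (x : vT) : x = x + x -> x = 0.
Proof. by rewrite -{1}(addr0 x) => /addrI /esym. Qed.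
Lemma br0l z : br 0 z = 0.
Proof. by apply: dbl0; have := hl1 1 0 0 z; rewrite !scale1r addr0. Qed.
Lemma br0r z : br z 0 = 0.
Proof. by apply: dbl0; have := hl2 1 z 0 0; rewrite !scale1r addr0. Qed.
Lemma brDl x y z : br (x + y) z = br x z + br y z.
Proof. by have := hl1 1 x y z; rewrite !scale1r. Qed.
Lemma brDr x y z : br z (x + y) = br z x + br z y.
Proof. by have := hl2 1 z x y; rewrite !scale1r. Qed.
Lemma brZl a x z : br (a *: x) z = a *: br x z.
Proof. by have := hl1 a x 0 z; rewrite !addr0 br0l addr0. Qed.
Lemma brZr a x z : br z (a *: x) = a *: br z x.
Proof. by have := hl2 a z x 0; rewrite !addr0 br0r addr0. Qed.
Lemma brNl x z : br (- x) z = - br x z.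
Proof. by rewrite -scaleN1r brZl scaleN1r. Qed.
Lemma brNr x z : br z (- x) = - br z x.
Proof. by rewrite -scaleN1r brZr scaleN1r. Qed.
Lemma brBl x y z : br (x - y) z = br x z - br y z.
Proof. by rewrite brDl brNl. Qed.
Lemma brBr x y z : br z (x - y) = br z x - br z y.
Proof. by rewrite brDr brNr. Qed.

Lemma lin_brr x : linear (br x).
Proof. by move=> a u v; rewrite hl2. Qed.
Lemma lin_brl z : linear (br^~ z).
Proof. by move=> a u v; rewrite hl1. Qed.
Definition adL x : 'End(vT) := toHom (lin_brr x).
Definition adR z : 'End(vT) := toHom (lin_brl z).
Lemma adLE x v : adL x v = br x v. Proof. exact: toHomE. Qed.
Lemma adRE z v : adR z v = br v z. Proof. exact: toHomE. Qed.

Definition pr0 : 'End(vT) := daddv_pi g0 g1.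
Definition pr1 : 'End(vT) := daddv_pi g1 g0.
Lemma pr_add v : pr0 v + pr1 v = v.
Proof. by apply: daddv_pi_add => //; rewrite hfull memvf. Qed.
Lemma pr0_mem v : pr0 v \in g0. Proof. exact: memv_pi. Qed.
Lemma pr1_mem v : pr1 v \in g1. Proof. exact: memv_pi. Qed.
Lemma pr0_g0 v : v \in g0 -> pr0 v = v. Proof. by move=> h; apply: daddv_pi_id. Qed.
Lemma pr1_g1 v : v \in g1 -> pr1 v = v. Proof. by move=> h; apply: daddv_pi_id. Qed.
Lemma pr1_g0 v : v \in g0 -> pr1 v = 0.
Proof. by move=> h; apply: (addrI (pr0 v)); rewrite pr_add addr0 pr0_g0. Qed.
Lemma pr0_g1 v : v \in g1 -> pr0 v = 0.
Proof. by move=> h; apply: (addIr (pr1 v)); rewrite pr_add add0r pr1_g1. Qed.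

Definition gr (V : {vspace vT}) := forall v, v \in V -> pr0 v \in V.
Lemma gr1 V : gr V -> forall v, v \in V -> pr1 v \in V.
Proof.
move=> hV v vV; have -> : pr1 v = v - pr0 v by rewrite -{2}(pr_add v) addrC addKr.
by rewrite rpredB // hV.
Qed.
Lemma grP V : gr V <-> ((V :&: g0) + (V :&: g1) = V)%VS.
Proof.
split => [hV | hV v].
  apply/eqP; rewrite eqEsubv subv_add !capvSl /=; apply/subvP => v vV.
  by rewrite -(pr_add v) memv_add // memv_cap ?pr0_mem ?pr1_mem ?hV ?gr1.
rewrite -{1}hV => /memv_addP [u uV [w wV ->]].
move: uV wV; rewrite !memv_cap => /andP [u1 u2] /andP [w1 w2].
by rewrite linearD /= pr0_g0 // pr0_g1 // addr0.
Qed.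
Lemma gr_add U V : gr U -> gr V -> gr (U + V)%VS.
Proof.
move=> hU hV v /memv_addP [u uU [w wV ->]].
by rewrite linearD memv_add ?hU ?hV.
Qed.
Lemma gr_cap U V : gr U -> gr V -> gr (U :&: V)%VS.
Proof. by move=> hU hV v; rewrite !memv_cap => /andP [a b]; rewrite hU ?hV. Qed.
Lemma gr_full : gr fullv. Proof. by move=> v _; apply: memvf. Qed.
Lemma gr_0 : gr 0%VS. Proof. by move=> v; rewrite memv0 => /eqP ->; rewrite linear0 mem0v. Qed.

Lemma gpart_cases b v : v \in gpart g0 g1 b -> pr0 v = v /\ pr1 v = 0 \/ pr0 v = 0 /\ pr1 v = v.
Proof.
case: b => /= h; [right | left]; split.
- exact: pr0_g1 h.
- exact: pr1_g1 h.
- exact: pr0_g0 h.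
- exact: pr1_g0 h.
Qed.

Lemma bil_hom (A B Z : {vspace vT}) : gr A -> gr B ->
  (forall a b x y, x \in A -> y \in B -> x \in gpart g0 g1 a -> y \in gpart g0 g1 b ->
     br x y \in Z) -> forall x y, x \in A -> y \in B -> br x y \in Z.
Proof.
move=> hA hB h x y xA yB.
rewrite -(pr_add x) -(pr_add y) !brDl !brDr.
apply: rpredD; apply: rpredD;
  [apply: (h false false) | apply: (h false true) | apply: (h true false) | apply: (h true true)];
  rewrite /= ?pr0_mem ?pr1_mem ?hA ?hB //; by apply: gr1.
Qed.

Lemma mem_brs (A B : {vspace vT}) x y : x \in A -> y \in B -> br x y \in brs br A B.
Proof.
move=> xA yB.
rewrite (coord_vbasis xA) (coord_vbasis yB) -adRE linear_sum rpred_sum // => i _.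
rewrite linearZ rpredZ //= adRE -adLE linear_sum rpred_sum // => j _.
rewrite linearZ rpredZ //= adLE; apply: memv_span; apply: allpairs_f;
  by rewrite mem_nth ?size_tuple.
Qed.

Lemma brs_sub (A B C : {vspace vT}) :
  (forall x y, x \in A -> y \in B -> br x y \in C) -> (brs br A B <= C)%VS.
Proof.
move=> h; apply/span_subvP => z /allpairsP [[x y] [/= xA yB ->]].
by apply: h; apply: vbasis_mem.
Qed.

Lemma brs_subH (A B C : {vspace vT}) : gr A -> gr B ->
  (forall a b x y, x \in A -> y \in B -> x \in gpart g0 g1 a -> y \in gpart g0 g1 b ->
     br x y \in C) -> (brs br A B <= C)%VS.
Proof. by move=> hA hB h; apply: brs_sub; apply: bil_hom. Qed.

Lemma preimP (f : 'End(vT)) (U Z : {vspace vT}) :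
  (U <= f @^-1: Z)%VS -> forall u, u \in U -> f u \in Z.
Proof. by move=> h u uU; rewrite memv_preim (subvP h). Qed.

Lemma gr_brs A B : gr A -> gr B -> gr (brs br A B).
Proof.
move=> hA hB; apply: preimP; apply: brs_subH => // a b x y xA yB xa yb.
rewrite -memv_preim; have := hpar a b x y xa yb => /gpart_cases [[-> _]|[-> _]].
  exact: mem_brs.
exact: mem0v.
Qed.

Lemma sum3 (a0 a1 b0 b1 c0 c1 : vT) :
  (a0 + b0 + c0) + (a1 + b1 + c1) = (a0 + a1) + (b0 + b1) + (c0 + c1).
Proof. by rewrite addrACA [X in X + _]addrACA. Qed.

Lemma jacA i s t q : s \in gpart g0 g1 i ->
  br t (br s q) = br (br t s) q + br s (br (pr0 t) q) + (-1) ^+ i *: br s (br (pr1 t) q).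
Proof.
move=> hs.
have step : forall c q, q \in gpart g0 g1 c ->
  br t (br s q) = br (br t s) q + br s (br (pr0 t) q) + (-1) ^+ i *: br s (br (pr1 t) q).
  move=> c q' hq.
  have -> : br t (br s q') = br (pr0 t) (br s q') + br (pr1 t) (br s q')
    by rewrite -brDl pr_add.
  have -> : br (br t s) q' = br (br (pr0 t) s) q' + br (br (pr1 t) s) q'
    by rewrite -brDl -brDl pr_add.
  rewrite (hjac false i c (pr0 t) s q' (pr0_mem t) hs hq) (hjac true i c (pr1 t) s q' (pr1_mem t) hs hq) /=.
  rewrite expr0 scale1r.
  by rewrite -!addrA; congr (_ + _); rewrite addrCA.
rewrite -(pr_add q) !brDr scalerDr.
rewrite (step false (pr0 q)) ?pr0_mem // (step true (pr1 q)) ?pr1_mem //.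
by rewrite sum3.
Qed.


Definition Dd := derived br.
Definition Ls j := lcs br Dd j.
Definition Cs j := if j is j'.+1 then Ls j' else fullv.
Definition ideal (V : {vspace vT}) := forall x y, y \in V -> br x y \in V.

Lemma Ls_S j : Ls j.+1 = brs br Dd (Ls j).
Proof. by rewrite /Ls /lcs iterS. Qed.
Lemma Ls_0 : Ls 0 = Dd. Proof. by []. Qed.

Lemma gr_Dd : gr Dd. Proof. exact: gr_brs gr_full gr_full. Qed.
Lemma gr_Ls j : gr (Ls j).
Proof. elim: j => [|j IH]; first exact: gr_Dd. by rewrite Ls_S; apply: gr_brs => //; apply: gr_Dd. Qed.
Lemma ideal_Dd : ideal Dd.
Proof. by move=> x y _; apply: mem_brs; apply: memvf. Qed.
Lemma mem_Dd x y : br x y \in Dd.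
Proof. by apply: mem_brs; apply: memvf. Qed.
Lemma ideal_Ls j : ideal (Ls j).
Proof.
elim: j => [|j IH]; first exact: ideal_Dd.
move=> x y; rewrite Ls_S => hy.
suff H : (brs br Dd (Ls j) <= adL x @^-1: brs br Dd (Ls j))%VS.
  by have := @preimP _ _ _ H y hy; rewrite adLE.
apply: brs_subH; [exact: gr_Dd | exact: gr_Ls | ].
move=> a b d l dD lL da lb; rewrite -memv_preim adLE (@jacA a d x l da).
by rewrite !rpredD ?rpredZ // mem_brs // ?ideal_Dd ?IH.
Qed.
Lemma Ls_dec j : (Ls j.+1 <= Ls j)%VS.
Proof. by rewrite Ls_S; apply: brs_sub => x y _ hy; apply: ideal_Ls. Qed.
Lemma Ls_Dd j : (Ls j <= Dd)%VS.
Proof. elim: j => [|j IH]; first exact: subvv. exact: subv_trans (Ls_dec j) IH. Qed.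

Lemma gr_Cs j : gr (Cs j). Proof. case: j => [|j]; [exact: gr_full | exact: gr_Ls]. Qed.
Lemma ideal_Cs j : ideal (Cs j).
Proof. case: j => [|j]; [by move=> x y _; apply: memvf | exact: ideal_Ls]. Qed.
Lemma Cs_D j d y : d \in Dd -> y \in Cs j -> br d y \in Cs j.+1.
Proof. case: j => [|j] hd hy; first exact: mem_Dd. by rewrite /Cs Ls_S; apply: mem_brs. Qed.
Lemma Cs_sq j x y : x \in Cs j -> y \in Cs j -> br x y \in Cs j.+1.
Proof.
case: j => [|j] hx hy; first exact: mem_Dd.
by rewrite /Cs Ls_S; apply: mem_brs => //; apply: (subvP (Ls_Dd j)).
Qed.
Lemma Cs_dec j : (Cs j.+1 <= Cs j)%VS.
Proof. case: j => [|j]; [exact: subvf | exact: Ls_dec]. Qed.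


Lemma limg_subP (f : 'End(vT)) (U Z : {vspace vT}) :
  (forall u, u \in U -> f u \in Z) -> (f @: U <= Z)%VS.
Proof. by move=> h; apply/subvP => z /memv_imgP [u uU ->]; apply: h. Qed.

Section ML.
Variables (S P N : {vspace vT}).
Hypotheses (grS : gr S) (grP_ : gr P) (idP_ : ideal P)
  (PD : forall d y, d \in Dd -> y \in P -> br d y \in N).

Definition Inv (X : {vspace vT}) := forall s x, s \in S -> x \in X -> br s x \in X.

Lemma ML_step X : gr X -> Inv X -> (N <= X)%VS -> (X <= P)%VS -> X != P ->
  (\dim X + 1 != \dim P)%N ->
  exists Y, [/\ gr Y, Inv Y, (X <= Y)%VS, (Y <= P)%VS & Y != P /\ ~~ (Y <= X)%VS].
Proof.
move=> grX invX NX XP XnP hd.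
have ltXP : (\dim X < \dim P)%N.
  rewrite ltnNge; apply: contra XnP => h; by rewrite eqEdim XP h.
have NXm : forall d y, d \in Dd -> y \in P -> br d y \in X.
  by move=> d y hd' hy; apply: (subvP NX); apply: PD.
have subXY : forall (Z : {vspace vT}) u, u \in X -> u \in (X + Z)%VS.
  by move=> Z u uX; apply: (subvP (addvSl _ _)).
have subZY : forall (Z : {vspace vT}) u, u \in Z -> u \in (X + Z)%VS.
  by move=> Z u uX; apply: (subvP (addvSr _ _)).
case: (classic (exists s p, [/\ s \in S, s \in g1, p \in P & br s p \notin X])).
  move=> [s [p [sS sg pP spX]]].
  set Y := (X + adL s @: P)%VS.
  have imgP : forall q, q \in P -> br s q \in (adL s @: P)%VS.
    by move=> q qP; rewrite -adLE memv_img.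
  have imgE : forall z, z \in (adL s @: P)%VS -> exists2 q, q \in P & z = br s q.
    by move=> z /memv_imgP [q qP ->]; exists q; rewrite ?adLE.
  exists Y; split.
  - apply: gr_add => // z /imgE [q qP ->].
    have -> : pr0 (br s q) = br s (pr1 q).
      rewrite -{1}(pr_add q) brDr linearD /=.
      rewrite (pr0_g1 _ (hpar true false _ _ sg (pr0_mem q))).
      by rewrite (pr0_g0 _ (hpar true true _ _ sg (pr1_mem q))) add0r.
    by apply: imgP; apply: gr1.
  - move=> t y tS /memv_addP [x xX [z /imgE [q qP ->] ->]].
    rewrite brDr; apply: rpredD; first by apply: subXY; apply: invX.
    rewrite (jacA true s t q sg) -addrA; apply: memv_add.
      by apply: NXm => //; apply: mem_Dd.
    by apply: rpredD; [|apply: rpredZ]; apply: imgP; apply: idP_.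
  - exact: addvSl.
  - rewrite subv_add XP /=; apply: limg_subP => u uP; rewrite adLE; exact: idP_.
  split.
  + apply/negP => /eqP hY; apply: (negP spX).
    have : p \in Y by rewrite hY.
    move=> /memv_addP [x xX [z /imgE [q qP ->] ->]].
    rewrite brDr; apply: rpredD; first exact: invX.
    have e := jacA true s s q sg.
    rewrite (pr0_g1 _ sg) (pr1_g1 _ sg) br0l br0r addr0 /= expr1 scaleN1r in e.
    have e2 : (2%:R : F) *: br s (br s q) = br (br s s) q.
      by rewrite scaler_nat mulr2n {1}e subrK.
    have -> : br s (br s q) = (2%:R : F)^-1 *: br (br s s) q.
      by rewrite -e2 scalerA mulVf // scale1r.
    by apply: rpredZ; apply: NXm => //; apply: mem_Dd.
  + apply/negP => YX; apply: (negP spX); apply: (subvP YX); apply: subZY; exact: imgP.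
move=> hodd.
have hodd' : forall s p, s \in S -> s \in g1 -> p \in P -> br s p \in X.
  move=> s p sS sg pP; apply: NNPP => h; apply: hodd; exists s, p; split => //; exact/negP.
case: (classic (exists a, [/\ a \in S, a \in g0 & ~ exists l : F, forall p, p \in P -> br a p - l *: p \in X])).
  move=> [a [aS ag hns]].
  have fP : forall v, v \in P -> adL a v \in P by move=> v vP; rewrite adLE; apply: idP_.
  have fX : forall v, v \in X -> adL a v \in X by move=> v vX; rewrite adLE; apply: invX.
  have [l [y yP [yX hy]]] := @eig_mod F vT (adL a) X P XP XnP fP fX.
  set g : 'End(vT) := adL a - l *: \1%VF.
  have gE : forall v, g v = br a v - l *: v.
    by move=> v; rewrite /g add_lfunE opp_lfunE scale_lfunE id_lfunE adLE.
  set Y := (X + g @: P)%VS.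
  have imgP : forall q, q \in P -> g q \in (g @: P)%VS by move=> q qP; rewrite memv_img.
  have gP : forall q, q \in P -> g q \in P by move=> q qP; rewrite gE rpredB ?rpredZ //; apply: idP_.
  have gX : forall q, q \in X -> g q \in X by move=> q qX; rewrite gE rpredB ?rpredZ //; apply: invX.
  exists Y; split.
  - apply: gr_add => // z /memv_imgP [q qP ->].
    have -> : pr0 (g q) = g (pr0 q).
      rewrite !gE linearB linearZ /= -{1}(pr_add q) brDr linearD /=.
      rewrite (pr0_g0 _ (hpar false false _ _ ag (pr0_mem q))).
      by rewrite (pr0_g1 _ (hpar false true _ _ ag (pr1_mem q))) addr0.
    by apply: imgP; apply: grP_.
  - move=> t z tS /memv_addP [x xX [w /memv_imgP [q qP ->] ->]].
    rewrite brDr; apply: rpredD; first by apply: subXY; apply: invX.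
    have -> : br t (g q) = br (br t a) q + g (br t q).
      rewrite !gE brBr brZr (jacA false a t q ag) /= expr0 scale1r.
      have -> : br a (br t q) = br a (br (pr0 t) q) + br a (br (pr1 t) q)
        by rewrite -brDr -brDl pr_add.
      by rewrite -!addrA.
    apply: memv_add; first by apply: NXm => //; apply: mem_Dd.
    by apply: imgP; apply: idP_.
  - exact: addvSl.
  - by rewrite subv_add XP /=; apply: limg_subP.
  split.
  + have H := @dim_img_mod F vT g X P y XP gX yP yX.
    have gy : g y \in X by rewrite gE -adLE.
    apply/negP => /eqP hY; have := H gy; by rewrite -/Y hY ltnn.
  + have [p [pP pX]] : exists p, p \in P /\ br a p - l *: p \notin X.
      apply: NNPP => h; apply: hns; exists l => p pP; apply: NNPP => hp; apply: h; exists p; split => //; exact/negP.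
    apply/negP => YX; apply: (negP pX); rewrite -gE; apply: (subvP YX); apply: subZY; exact: imgP.
move=> heven.
have heven' : forall a, a \in S -> a \in g0 -> exists l : F, forall p, p \in P -> br a p - l *: p \in X.
  move=> a aS ag; apply: NNPP => h; apply: heven; exists a; split => //.
have [p0 p0P p0X] : exists2 p, p \in P & p \notin X.
  apply: NNPP => h; move/negP: XnP; apply; rewrite eqEsubv XP /=.
  apply/subvP => q qP; apply: NNPP => qX; apply: h; exists q => //; exact/negP.
have [v [b [vP vX vb]]] : exists v b, [/\ v \in P, v \notin X & v \in gpart g0 g1 b].
  case: (boolP (pr0 p0 \in X)) => h0.
    exists (pr1 p0), true; split; [exact: gr1 | | exact: pr1_mem].
    by apply: contra p0X => h1; rewrite -(pr_add p0) rpredD.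
  by exists (pr0 p0), false; split; [exact: grP_ | | exact: pr0_mem].
set Y := (X + <[v]>)%VS.
exists Y; split.
- apply: gr_add => // z /vlineP [k ->]; rewrite linearZ /=.
  have [[-> _]|[-> _]] := gpart_cases b v vb.
    by apply: rpredZ; apply: memv_line.
  by rewrite scaler0; apply: mem0v.
- move=> t y tS /memv_addP [x xX [z /vlineP [k ->] ->]].
  rewrite brDr brZr; apply: rpredD; first by apply: subXY; apply: invX.
  apply: rpredZ; rewrite -(pr_add t) brDl.
  have t0S : pr0 t \in S by apply: grS.
  have t1S : pr1 t \in S by apply: gr1.
  have [l hl] := heven' _ t0S (pr0_mem t).
  have -> : br (pr0 t) v = (br (pr0 t) v - l *: v) + l *: v by rewrite subrK.
  apply: rpredD; first apply: rpredD.
  + by apply: subXY; apply: hl.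
  + by apply: subZY; apply: rpredZ; apply: memv_line.
  + by apply: subXY; apply: hodd' => //; apply: pr1_mem.
- exact: addvSl.
- by rewrite subv_add XP -memvE.
split.
- apply/negP => /eqP hY.
  have := dimv_sum_cap X <[v]>; rewrite -/Y hY.
  have : (\dim <[v]> <= 1)%N by rewrite dim_vline; case: (v != 0).
  move: hd; rewrite neq_ltn => /orP [h|h]; lia.
- apply/negP => h; apply: (negP vX); apply: (subvP h); apply: subZY; exact: memv_line.
Qed.

Lemma ML n : forall X, (\dim P - \dim X <= n)%N -> gr X -> Inv X -> (N <= X)%VS ->
  (X <= P)%VS -> X != P ->
  exists W, [/\ gr W, Inv W, (X <= W)%VS, (W <= P)%VS & (\dim W + 1 = \dim P)%N].
Proof.
elim: n => [|n IH] X hd grX invX NX XP XnP.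
- have : (\dim X < \dim P)%N.
    rewrite ltnNge; apply: contra XnP => h; by rewrite eqEdim XP h.
  lia.
- have ltXP : (\dim X < \dim P)%N.
    rewrite ltnNge; apply: contra XnP => h; by rewrite eqEdim XP h.
  case: (boolP (\dim X + 1 == \dim P)%N) => hX.
    by exists X; split => //; apply/eqP.
  have [Y [grY invY XY YP [YnP YX]]] := ML_step X grX invX NX XP XnP hX.
  have ltXY : (\dim X < \dim Y)%N.
    rewrite ltnNge; apply: contra YX => h.
    have : (X == Y) by rewrite eqEdim XY h.
    by move/eqP => ->.
  have ltYP : (\dim Y < \dim P)%N.
    rewrite ltnNge; apply: contra YnP => h; by rewrite eqEdim YP h.
  have [W [grW invW YW WP dW]] := IH Y ltac:(lia) grY invY (subv_trans NX XY) YP YnP.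
  by exists W; split => //; apply: subv_trans XY YW.
Qed.
End ML.

Lemma findj (Pr : nat -> Prop) n : Pr 0 -> ~ Pr n -> exists j, Pr j /\ ~ Pr j.+1.
Proof.
move=> h0; elim: n => [|n IH] hn; first by [].
case: (classic (Pr n)) => hPn; first by exists n.
exact: IH.
Qed.

Lemma inv_rev (S W : {vspace vT}) : gr S -> gr W -> Inv S W ->
  forall w s, w \in W -> s \in S -> br w s \in W.
Proof.
move=> grS grW invW; apply: bil_hom => // a b x y xW yS xa yb.
by rewrite (hanti a b x y xa yb) rpredN rpredZ // invW.
Qed.

Lemma main (S : {vspace vT}) (hS : sub_superalgebra g0 g1 br S) (hproper : S != fullv)
  (hcs : completely_solvable br) :
  exists2 T : {vspace vT}, sub_superalgebra g0 g1 br T &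
    (S <= T)%VS /\ (\dim T + 1)%N = \dim (fullv : {vspace vT}).
Proof.
case: hS => hS1 clS.
have grS : gr S by apply/grP.
case: hcs => k hk.
have [j [hj hj1]] : exists j, (S + Cs j = fullv)%VS /\ ~ (S + Cs j.+1 = fullv)%VS.
  apply: (@findj _ k.+1); first by rewrite addvf.
  by rewrite /= /Ls hk addv0 => h; move/eqP: hproper.
set Pp := Cs j; set Nn := Cs j.+1.
set R := (Pp :&: (S + Nn))%VS.
have grR : gr R by apply: gr_cap; [apply: gr_Cs | apply: gr_add => //; apply: gr_Cs].
have invR : Inv S R.
  move=> s x sS; rewrite memv_cap => /andP [xP /memv_addP [u uS [n nN ex]]].
  rewrite memv_cap; apply/andP; split; first exact: (ideal_Cs j s x xP).
  rewrite ex.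
  rewrite brDr; apply: memv_add; [exact: clS | exact: (ideal_Cs j.+1 s n nN)].
have NR : (Nn <= R)%VS.
  by rewrite subv_cap Cs_dec addvSr.
have RP : (R <= Pp)%VS by apply: capvSl.
have RnP : R != Pp.
  apply/negP => /eqP hR; apply: hj1; apply/eqP; rewrite eqEsubv subvf /=.
  rewrite -hj subv_add addvSl /=.
  have := capvSr Pp (S + Nn); rewrite -/R hR; by [].
have [W [grW invW RW WP dW]] := @ML S Pp Nn grS (gr_Cs j) (ideal_Cs j)
   (fun d y hd hy => Cs_D j d y hd hy) (\dim Pp - \dim R) R (leqnn _) grR invR NR RP RnP.
exists (S + W)%VS; last split.
- split; first by apply/grP; apply: gr_add.
  move=> x y /memv_addP [s sS [w wW ->]] /memv_addP [s' sS' [w' wW' ->]].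
  rewrite !brDl !brDr.
  have hw : w \in Pp by rewrite (subvP WP).
  have hw' : w' \in Pp by rewrite (subvP WP).
  rewrite -addrA; apply: memv_add; first exact: clS.
  apply: rpredD; first exact: invW.
  apply: rpredD; first exact: (inv_rev S W grS grW invW w s' wW sS').
  apply: (subvP RW); apply: (subvP NR); exact: Cs_sq.
- exact: addvSl.
- have d1 := dimv_sum_cap S W.
  have d2 := dimv_sum_cap S Pp.
  rewrite hj in d2.
  have e1 : (\dim (S :&: W) <= \dim (S :&: Pp))%N by apply: dimvS; apply: capvS.
  have e2 : (\dim (S :&: Pp) <= \dim (S :&: W))%N.
    apply: dimvS; apply/subvP => x; rewrite !memv_cap => /andP [xS xP].
    rewrite xS /=; apply: (subvP RW); rewrite memv_cap xP /=.
    exact: (subvP (addvSl _ _)).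
  have e3 : (\dim R < \dim Pp)%N.
    rewrite ltnNge; apply: contra RnP => h; by rewrite eqEdim RP h.
  lia.
Qed.

End Super.

Theorem lemma5p1 (F : closedFieldType) (p : nat)
    (charFp : p \in [pchar F]) (p_gt2 : (2 < p)%N)
    (vT : vectType F) (g0 g1 : {vspace vT}) (br : vT -> vT -> vT)
    (hLie : is_lie_superalgebra g0 g1 br)
    (hcs : completely_solvable br)
    (S : {vspace vT}) (hS : sub_superalgebra g0 g1 br S)
    (hproper : S != fullv) :
  exists2 T : {vspace vT}, sub_superalgebra g0 g1 br T &
    (S <= T)%VS /\ (\dim T + 1)%N = \dim (fullv : {vspace vT}).
Proof.
have h2 : (2%:R : F) != 0.
  rewrite -(dvdn_pcharf charFp); apply/negP => /dvdn_leq h; have := h isT; lia.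
exact: (@main F vT g0 g1 br hLie h2 S hS hproper hcs).
Qed.
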